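(* Let $G$ be an abelian profinite-$C$ group. Then the following are equivalent: (i) $G$ is a $C$-group; (ii) $G$ is a torsion group; (iii) $G$ has squarefree finite exponent.
   Context: A permutable complement of a subgroup $H$ of a group $G$ is a subgroup $K$ with $G=HK$ and $H\cap K=1$. A group is a $C$-group if every subgroup has a permutable complement. A profinite group $G$ is a profinite-$C$ group if every closed subgroup of $G$ has a closed permutable complement in $G$. *)

(* Defs.v *)
(* Abelian groups are written additively:
   an abelian topological group is a [topologicalZmodType] (tvs.v). *)
From HB Require Import structures.
From mathcomp Require Import all_boot all_order all_algebra.
From mathcomp Require Import boolp classical_sets topology tvs.
Set Implicit Arguments. Unset Strict Implicit. Unset Printing Implicit Defensive.
Import GRing.Theory.
Local Open Scope classical_set_scope.
Local Open Scope ring_scope.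

Definition is_subgroup (G : zmodType) (H : set G) : Prop :=
  H 0 /\ (forall x y, H x -> H y -> H (x - y)).

Definition permutable_complement (G : zmodType) (H K : set G) : Prop :=
  is_subgroup K /\
  (forall g : G, exists h k, H h /\ K k /\ g = h + k) /\
  (forall x : G, H x -> K x -> x = 0).

Definition C_group (G : zmodType) : Prop :=
  forall H : set G, is_subgroup H -> exists K : set G, permutable_complement H K.

Definition profinite (G : topologicalZmodType) : Prop :=
  compact [set: G] /\ hausdorff_space G /\ totally_disconnected [set: G].

Definition profinite_C_group (G : topologicalZmodType) : Prop :=
  profinite G /\
  forall H : set G, is_subgroup H -> closed H ->
    exists K : set G, closed K /\ permutable_complement H K.

Definition torsion_group (G : zmodType) : Prop :=
  forall x : G, exists n : nat, (0 < n)%N /\ x *+ n = 0.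

Definition squarefree (n : nat) : Prop :=
  forall p : nat, prime p -> ~~ (p * p %| n)%N.

Definition is_exponent (G : zmodType) (e : nat) : Prop :=
  (0 < e)%N /\ (forall x : G, x *+ e = 0) /\
  (forall n : nat, (0 < n)%N -> (forall x : G, x *+ n = 0) -> (e <= n)%N).

Definition squarefree_finite_exponent (G : zmodType) : Prop :=
  exists e : nat, is_exponent G e /\ squarefree e.

(* Main.v *)
From HB Require Import structures.
Require Import Defs.
From mathcomp Require Import all_boot all_order all_algebra finmap.
From mathcomp Require Import boolp classical_sets cardinality topology tvs.
Set Implicit Arguments. Unset Strict Implicit. Unset Printing Implicit Defensive.
Import GRing.Theory Num.Theory.
Local Open Scope classical_set_scope.
Local Open Scope ring_scope.



Section Alg.
Variable G : zmodType.
Implicit Types (H K : set G) (x y : G).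

Lemma sg0 H : is_subgroup H -> H 0. Proof. by case. Qed.
Lemma sgN H x : is_subgroup H -> H x -> H (- x).
Proof. by case=> h0 hB hx; rewrite -sub0r; apply: hB. Qed.
Lemma sgD H x y : is_subgroup H -> H x -> H y -> H (x + y).
Proof. move=> hs hx hy; rewrite -[y]opprK; have [_ hB] := hs; apply: hB => //; exact: sgN. Qed.
Lemma sgB H x y : is_subgroup H -> H x -> H y -> H (x - y).
Proof. by case=> _ hB; apply: hB. Qed.
Lemma sgMn H x n : is_subgroup H -> H x -> H (x *+ n).
Proof. move=> hs hx; elim: n => [|n IH]; first by rewrite mulr0n; exact: sg0.
by rewrite mulrS; apply: sgD. Qed.
Lemma sgMz H x z : is_subgroup H -> H x -> H (x *~ z).
Proof. move=> hs hx; case: z => n; first by rewrite /= ; apply: sgMn.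
by rewrite NegzE mulrNz; apply: sgN => //; apply: sgMn. Qed.

Definition mset n : set G := [set x *+ n | x in [set: G]].
Lemma mset_sg n : is_subgroup (mset n).
Proof. split; first by exists 0 => //; rewrite mul0rn.
by move=> _ _ [a _ <-] [b _ <-]; exists (a - b) => //; rewrite mulrnBl. Qed.


Lemma decomp n : (exists K, permutable_complement (mset n) K) ->
  forall g : G, exists w l : G, g = w *+ n + l /\ l *+ n = 0.
Proof.
case=> K [sK [cov dis]] g; have [h [k [[w _ <-] [Kk ->]]]] := cov g.
exists w, k; split => //; apply: dis; last exact: sgMn.
by exists k.
Qed.

Definition cyc x : set G := [set x *~ z | z in [set: int]].
Lemma cyc_sg x : is_subgroup (cyc x).
Proof. split; first by exists 0%R => //; rewrite mulr0z.
by move=> _ _ [a _ <-] [b _ <-]; exists (a - b)%R => //; rewrite mulrzBr. Qed.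

Lemma lemA x y n : (exists K, permutable_complement (cyc x) K) ->
  x = y *+ n -> x *+ n = 0 -> x = 0.
Proof.
case=> K [sK [cov dis]] xy xn; have [h [k [[z _ <-] [Kk yE]]]] := cov y.
apply: dis; first by exists 1%R => //; rewrite mulr1z.
suff -> : x = k *+ n by apply: sgMn.
have e : (x *~ z) *+ n = 0.
  by rewrite -mulrz_nat -mulrzA mulrC mulrzA mulrz_nat xn mul0rz.
by rewrite {1}xy yE mulrnDl e add0r.
Qed.
Lemma mod_mul (x : G) (z : int) m : (0 < m)%N -> x *+ m = 0 ->
  (`|(z %% m)%Z|%N < m)%N /\ x *+ `|(z %% m)%Z|%N = x *~ z.
Proof. move=> m0 xm.
have mn0 : (m%:Z != 0) by rewrite eqz_nat -lt0n.
have ge : (0 <= (z %% m)%Z)%R by rewrite modz_ge0.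
split.
  by rewrite -ltz_nat gez0_abs // ltz_pmod.
rewrite -mulrz_nat.
have -> : (`|(z %% m)%Z|%N%:R : int) = (z %% m)%Z by rewrite natz gez0_abs.
have E : x *~ ((z %/ m)%Z * m) = 0 by rewrite mulrC mulrzA -(natz m) mulrz_nat xm mul0rz.
by rewrite [in RHS](divz_eq z m) [in RHS]mulrzDr E add0r.
Qed.

End Alg.



Section Top.
Variable G : topologicalZmodType.
Hypothesis hG : hausdorff_space G.
Hypothesis cG : compact [set: G].

Lemma contD (f g : G -> G) : continuous f -> continuous g ->
  continuous (fun x => f x + g x).
Proof.
move=> cf cg x.
apply: (@continuous_comp _ _ _ (fun x => (f x, g x)) (fun x : G * G => x.1 + x.2)).
  by apply: cvg_pair; [exact: cf|exact: cg].
exact: add_continuous.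
Qed.

Lemma natmul_cont n : continuous (fun x : G => x *+ n).
Proof.
elim: n => [|n IH].
  have -> : (fun x : G => x *+ 0) = fun=> 0 by apply/funext => x; rewrite mulr0n.
  exact: cst_continuous.
have -> : (fun x : G => x *+ n.+1) = fun x => x + x *+ n.
  by apply/funext => x; rewrite mulrS.
by apply: (@contD (fun x => x) (fun x => x *+ n)) => // y; exact: cvg_id.
Qed.

Lemma image_closed (f : G -> G) : continuous f -> closed (f @` [set: G]).
Proof.
move=> cf; apply: compact_closed => //; apply: continuous_compact => //.
exact: continuous_subspaceT.
Qed.

Lemma mset_closed n : closed (@mset G n).
Proof. have := image_closed (@natmul_cont n); by []. Qed.

Lemma tmset_closed a n : closed [set a + w *+ n | w in [set: G]].
Proof. apply: (@image_closed (fun w => a + w *+ n)).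
by apply: contD; [exact: cst_continuous|exact: (@natmul_cont n)]. Qed.

Lemma cyc_closed (x : G) m : (0 < m)%N -> x *+ m = 0 -> closed (cyc x).
Proof.
move=> m0 xm.
have -> : cyc x = [set x *+ k | k in `I_m].
  apply/seteqP; split => _ [z _ <-].
    by have [h1 h2] := mod_mul z m0 xm; exists `|(z %% m)%Z|%N.
  by exists z%:Z.
apply: compact_closed => //; apply: finite_compact; apply: finite_image.
exact: finite_II.
Qed.
End Top.



Definition sqf (G : zmodType) (f : G * nat -> G * nat) : nat -> G * nat :=
  fix sq k := match k with
  | 0%N => (0, 1%N)
  | k'.+1 => ((sq k').1 + (f (sq k')).1, ((sq k').2 * (f (sq k')).2 * k'.+1)%N)
  end.

Section Exp.
Variable G : topologicalZmodType.
Hypothesis hG : hausdorff_space G.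
Hypothesis cG : compact [set: G].
Hypothesis CP : forall H : set G, is_subgroup H -> closed H ->
  exists K, permutable_complement H K.
Hypothesis tor : torsion_group G.

Lemma lemA' (x y : G) n : x = y *+ n -> x *+ n = 0 -> x = 0.
Proof.
move=> xy xn; have [m [m0 xm]] := tor x.
apply: (lemA (y:=y) (n:=n)) => //; apply: CP; first exact: cyc_sg.
exact: (cyc_closed hG m0 xm).
Qed.

Lemma ann_exists : exists n, (0 < n)%N /\ forall x : G, x *+ n = 0.
Proof.
apply: contrapT => NA.
have step : forall n, (0 < n)%N -> exists b m, (exists w : G, b = w *+ n) /\
    b *+ n != 0 /\ (0 < m)%N /\ b *+ m = 0.
  move=> n n0; have [g gn] : exists g : G, g *+ n != 0.
    apply: contrapT => H; apply: NA; exists n; split => // x.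
    by apply/eqP; apply: contrapT => /negP xn; apply: H; exists x.
  have [w [l [gE ln]]] := decomp (CP (@mset_sg G n) (@mset_closed _ hG cG n)) g.
  have [m [m0 bm]] := tor (w *+ n).
  exists (w *+ n), m; split; first by exists w.
  split => //; move: gn; by rewrite gE mulrnDl ln addr0.
have ex : forall s : G * nat, exists t : G * nat, (0 < s.2)%N ->
   (exists w : G, t.1 = w *+ s.2) /\ t.1 *+ s.2 != 0 /\ (0 < t.2)%N /\
   t.1 *+ t.2 = 0.
  move=> s; case: (posnP s.2) => [->|s0]; first by exists s.
  by have [b [m H]] := step _ s0; exists (b, m).
have [f fP] := choice ex.
pose sq := sqf f.
have inv : forall k, (0 < (sq k).2)%N /\ (sq k).1 *+ (sq k).2 = 0.
  elim => [|k [IH1 IH2]]; first by rewrite /= mul0rn.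
  have [_ [_ [m0 bm]]] := fP _ IH1.
  split; first by rewrite /= !muln_gt0 IH1 m0.
  rewrite /= mulrnDl.
  have -> : (sq k).1 *+ ((sq k).2 * (f (sq k)).2 * k.+1) = 0.
    by rewrite !mulrnA IH2 !mul0rn.
  by rewrite mulnAC mulnC mulrnA bm mul0rn addr0.
have dvd : forall k j, (k <= j)%N -> ((sq k).2 %| (sq j).2)%N.
  move=> k j /subnK <-; elim: (j - k)%N => [|d IH]; first by rewrite add0n.
  by rewrite addSn /= -mulnA dvdn_mulr.
have dvdS : forall k, (k.+1 %| (sq k.+1).2)%N by move=> k; rewrite /= dvdn_mull.
have mem : forall k j, (k <= j)%N -> exists w, (sq j).1 = (sq k).1 + w *+ (sq k).2.
  move=> k j /subnK <-; elim: (j - k)%N => [|d IH].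
    by exists 0; rewrite add0n mul0rn addr0.
  have [w wE] := IH; have [[w' w'E] _] := fP _ (proj1 (inv (d + k)%N)).
  have /dvdnP [c cE] := dvd k (d + k)%N (leq_addl _ _).
  exists (w + w' *+ c); rewrite addSn /= wE w'E cE mulnC mulrnA.
  by rewrite mulrnDl addrA mulrnAC.
have [y [_ cly]] : [set: G] `&` cluster ((fun k => (sq k).1) @ \oo) !=set0.
  have := @cG ((fun k => (sq k).1) @ \oo). move=> h; apply: h. exact: filterT.
have inC : forall k, exists w, y = (sq k).1 + w *+ (sq k).2.
  move=> k; have Ccl := @tmset_closed G hG cG (sq k).1 (sq k).2.
  suff : [set (sq k).1 + w *+ (sq k).2 | w in [set: G]] y.
    by case=> w _ <-; exists w.
  apply: Ccl => B By; apply: cly By.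
  apply: filterS (nbhs_infty_ge k) => j /= kj.
  by have [w wE] := mem _ _ kj; exists w.
have [m [m0 ym]] := tor y.
move: m0; case: m ym => // m ym _.
have mj : forall j, (m.+1 <= j)%N -> y *+ (sq j).2 = 0.
  move=> j mj; have /dvdnP [c ->] := dvdn_trans (dvdS m) (dvd _ _ mj).
  by rewrite mulnC mulrnA ym mul0rn.
have [w wE] := inC m.+2.
have d0 : y - (sq m.+2).1 = 0.
  apply: (@lemA' _ w (sq m.+2).2); first by rewrite wE addrAC subrr add0r.
  by rewrite mulrnBl mj // (proj2 (inv _)) subrr.
have [_ [bn _]] := fP _ (proj1 (inv m.+1)).
move: bn; apply/negP; rewrite negbK; apply/eqP.
have e : (sq m.+2).1 = (sq m.+1).1 + (f (sq m.+1)).1 by [].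
have := mj _ (leqnn _); move/eqP: d0; rewrite subr_eq0 => /eqP ->.
by rewrite e mulrnDl (proj2 (inv m.+1)) add0r.
Qed.
Lemma sqf_exp : squarefree_finite_exponent G.
Proof.
pose P := fun n => `[< (0 < n)%N /\ forall x : G, x *+ n = 0 >].
have exP : exists n, P n by case: ann_exists => n H; exists n; apply/asboolP.
case: (ex_minnP exP) => e /asboolP [e0 eA] emin.
exists e; split.
  split => //; split => // n n0 nA; apply: emin; apply/asboolP; by [].
move=> p pp; apply/negP => /dvdnP [c eE].
have c0 : (0 < c)%N by move: e0; rewrite eE muln_gt0 => /andP [].
have p0 : (0 < p)%N by exact: prime_gt0.
have : P (c * p)%N.
  apply/asboolP; split; first by rewrite muln_gt0 c0 p0.
  move=> x; apply: (@lemA' (x *+ (c * p)) (x *+ c) p); first by rewrite mulrnA.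
  by rewrite -mulrnA -mulnA -eE eA.
by move/emin; rewrite eE mulnA leqNgt ltn_Pmulr ?muln_gt0 ?c0 ?p0 ?prime_gt1.
Qed.
End Exp.



Section Semi.
Variable G : zmodType.
Implicit Types (H K M : set G) (x y : G).

Lemma bez M y p q : is_subgroup M -> (0 < p)%N -> coprime p q ->
  M (y *+ p) -> M (y *+ q) -> M y.
Proof.
move=> sM p0 cpq yp yq; have [a _ /dvdnP [c cE]] := Bezoutl q p0.
move: cE; rewrite (eqP cpq) => cE.
have -> : y = (y *+ p) *+ c - (y *+ q) *+ a.
  by rewrite -!mulrnA (mulnC p) -cE mulrnDr mulr1n (mulnC q) addrK.
by apply: sgB => //; apply: sgMn.
Qed.

Lemma key M x p z : is_subgroup M -> prime p -> x *+ p = 0 -> ~ M x ->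
  M (x *~ z) -> x *~ z = 0.
Proof.
move=> sM pp xp xM xz; have p0 := prime_gt0 pp.
have [rl rE] := mod_mul z p0 xp; move: xz; rewrite -rE.
set r := `|(z %% p)%Z|%N in rl *; case: (posnP r) => [-> //|r0 xr].
exfalso; apply: xM; apply: (bez (p := p) (q := r)) => //.
  by rewrite prime_coprime // gtnNdvd.
by rewrite xp; apply: sg0.
Qed.

Lemma C_of_sqf : squarefree_finite_exponent G -> C_group G.
Proof.
move=> [e [[e0 [eA _]] sqe]] H sH.
pose P := fun K : set G => (forall x y, K x -> K y -> K (x - y)) /\
  (forall x, H x -> K x -> x = 0).
have [A [[AB Adis] Amax]] : exists A, P A /\ forall B, A `<` B -> ~ P B.
  apply: Zorn_bigcup => F FP Ftot; split.
    move=> x y [X FX Xx] [Y FY Yy].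
    have [XY|YX] := Ftot _ _ FX FY.
      by exists Y => //; apply: (proj1 (FP _ FY)) => //; apply: XY.
    by exists X => //; apply: (proj1 (FP _ FX)) => //; apply: YX.
  by move=> x Hx [X FX Xx]; apply: (proj2 (FP _ FX)).
have A0 : A 0.
  apply: contrapT => nA0; apply: (Amax [set 0]).
    split; first by move=> x Ax; exfalso; apply: nA0; rewrite -(subrr x); exact: AB.
    by move=> /(_ 0 erefl).
  by split; [move=> x y -> ->; rewrite subrr|move=> x _ ->].
have sA : is_subgroup A by split.
exists A; split => //; split; last by [].
pose M := [set h + k | h in H & k in A].
have sM : is_subgroup M.
  split; first by exists 0; [exact: sg0|exists 0 => //; rewrite addr0].
  move=> _ _ [h1 H1 [k1 A1 <-]] [h2 H2 [k2 A2 <-]].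
  exists (h1 - h2); first exact: sgB.
  by exists (k1 - k2); [exact: sgB | rewrite opprD addrACA].
move=> g; apply: contrapT => ng.
have gM : ~ M g by move=> [h Hh [k Ak gE]]; apply: ng; exists h, k.
have AM : forall k, A k -> M k.
  by move=> k Ak; exists 0; [exact: sg0|exists k => //; rewrite add0r].
pose Q := fun n => `[< (0 < n)%N /\ M (g *+ n) >].
have exQ : exists n, Q n.
  by exists e; apply/asboolP; split => //; rewrite eA; exact: sg0.
case: (ex_minnP exQ) => n /asboolP [n0 Mn] nmin.
have n1 : (1 < n)%N.
  rewrite ltn_neqAle n0 andbT; apply/eqP => n1; apply: gM.
  by move: Mn; rewrite -n1 mulr1n.
have ne : (n %| e)%N.
  rewrite /dvdn; apply/eqP.
  case: (posnP (e %% n)) => // r0; exfalso.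
  have : Q (e %% n)%N.
    apply/asboolP; split => //.
    have -> : g *+ (e %% n) = g *+ e - (g *+ n) *+ (e %/ n).
      by rewrite {2}(divn_eq e n) mulrnDr -mulrnA mulnC addrC addKr.
    by apply: sgB => //; [rewrite eA; exact: sg0|exact: sgMn].
  by move/nmin; rewrite leqNgt ltn_pmod.
set p := pdiv n; have pp : prime p by exact: pdiv_prime.
have pn : (p %| n)%N by exact: pdiv_dvd.
have p0 := prime_gt0 pp.
have pe : (p %| e)%N by exact: dvdn_trans ne.
set q := (e %/ p)%N; have eq : e = (q * p)%N by rewrite divnK.
have cpq : coprime p q.
  rewrite prime_coprime //; apply/negP => /dvdnP [c qc].
  by have := sqe p pp; rewrite eq qc -mulnA dvdn_mull.
set g' := g *+ (n %/ p).
have g'M : ~ M g'.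
  move=> Mg'; have : Q (n %/ p)%N.
    by apply/asboolP; split => //; rewrite divn_gt0 // dvdn_leq.
  by move/nmin; rewrite leqNgt ltn_Pdiv // prime_gt1.
have g'p : M (g' *+ p) by rewrite -mulrnA divnK.
pose x := g' *+ q.
have xp : x *+ p = 0 by rewrite -mulrnA -eq mulrnAC eA mul0rn.
have xM : ~ M x by move=> Mx; apply: g'M; exact: (bez (p := p) (q := q)).
pose B := [set k + x *~ z | k in A & z in [set: int]].
apply: (Amax B).
  split.
    by move=> k Ak; exists k => //; exists 0 => //; rewrite mulr0z addr0.
  move=> BA; apply: xM; apply: AM; apply: BA.
  by exists 0 => //; exists 1 => //; rewrite mulr1z add0r.
split.
  move=> _ _ [k1 A1 [z1 _ <-]] [k2 A2 [z2 _ <-]].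
  exists (k1 - k2); first exact: AB.
  by exists (z1 - z2) => //; rewrite mulrzBr opprD addrACA.
move=> h Hh [k Ak [z _ hE]].
have xz : M (x *~ z).
  exists (k + x *~ z); first by rewrite hE.
  by exists (- k); [exact: sgN|rewrite addrAC subrr add0r].
have x0 := key sM pp xp xM xz.
by move: hE Hh; rewrite x0 addr0 => <- Hk; apply: Adis.

Qed.
End Semi.



Section PT.
Variable G : topologicalZmodType.
#[non_forgetful_inheritance]
HB.instance Definition _ := isPointed.Build G 0.
Lemma cover_of_compact (Y : set G) : compact Y -> cover_compact Y.
Proof. by rewrite compact_cover. Qed.
End PT.

Section Conn.
Variable G : topologicalZmodType.

Lemma tube (B O : set G) : compact B -> open O -> B `<=` O ->
  exists2 N, nbhs (0 : G) N & forall a n, B a -> N n -> O (a + n).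
Proof.
move=> cB oO BO.
have H := (proj1 (compact_near_coveringP B)) cB G (nbhs (0 : G)) (fun n a => O (a + n)) _.
have : \forall n \near nbhs (0 : G), B `<=` (fun a : G => O (a + n)).
  apply: H => a Ba.
  have Oa : nbhs (a + (0:G)) O.
    by rewrite addr0; apply: open_nbhs_nbhs; split => //; exact: BO.
  exact: (@add_continuous G (a, 0) O Oa).
move=> N; exists (fun n => B `<=` (fun a : G => O (a + n))) => //.
by move=> a n Ba Nn; apply: Nn.
Qed.

Lemma sub_nbhs (x y : G) N : nbhs (x - y) N ->
  exists U, exists V, [/\ nbhs x U, nbhs y V & forall u v, U u -> V v -> N (u - v)].
Proof.
move=> Nn; have := @sub_continuous G (x, y) N Nn.
move=> [[U V] /= [Ux Vy] UV]; exists U, V; split => // u v Uu Vv.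
exact: (UV (u, v)).
Qed.

Lemma closure_sg (K : set G) : is_subgroup K -> is_subgroup (closure K).
Proof.
move=> sK; split; first by apply: subset_closure; exact: sg0.
move=> x y cx cy B Bn.
have [U [V [Ux Vy UV]]] := sub_nbhs Bn.
have [a [Ka Ua]] := cx U Ux; have [b [Kb Vb]] := cy V Vy.
by exists (a - b); split; [exact: sgB|exact: UV].
Qed.

Lemma div_conn (Y : set G) : compact Y -> is_subgroup Y ->
  (forall y n, Y y -> (0 < n)%N -> exists2 x, Y x & x *+ n = y) -> connected Y.
Proof.
move=> cY sY dY B [b Bb] [O oO BE] [C cC BE'].
have BY : B `<=` Y by rewrite BE => z [].
have cB : compact B by rewrite BE'; exact: compact_closedI.
have BO : B `<=` O by rewrite BE => z [].
have [N N0 NP] := tube cB oO BO.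
have step : forall a c m, B a -> Y c -> N c -> B (a + c *+ m).
  move=> a c m Ba Yc Nc; elim: m => [|m IH]; first by rewrite mulr0n addr0.
  rewrite mulrSr addrA BE; split.
    by apply: sgD => //; exact: BY.
  exact: NP.
have [N2 N20 N2P] : exists2 N2, nbhs (0:G) N2 &
    forall u v, N2 u -> N2 v -> N (u - v).
  have := @sub_nbhs 0 0 N; rewrite subr0 => /(_ N0) [U [V [U0 V0 UV]]].
  exists (U `&` V); first exact: filterI.
  by move=> u v [Uu _] [_ Vv]; exact: UV.
have [N1 [oN1 N10] N1N2] : exists2 N1, open_nbhs (0:G) N1 & N1 `<=` N2.
  by move: N20; rewrite nbhsE.
pose f := fun y : G => [set z | N1 (z - y)].
have fo : forall y, open (f y).
  move=> y; have cf : continuous (fun z : G => z - y).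
    apply: (@contD G (fun z => z) (fun=> - y)) => z; first exact: cvg_id.
    exact: cvg_cst.
  exact: (proj1 (continuousP _) cf N1 oN1).
have cov : Y `<=` cover Y f by move=> y Yy; exists y => //; rewrite /f /= subrr.
move/cover_of_compact: cY => cY.
have [D' D'Y Ycov] := cY G Y f (fun i _ => fo i) cov.
set s := enum_fset D'; set r := size s.
have pig : forall x, Y x -> exists2 j, (0 < j <= r)%N & N (x *+ j).
  move=> x Yx.
  have ex : forall k : 'I_r.+1, exists j : 'I_r, N1 (x *+ k - nth 0 s j).
    move=> k; have [i Di fi] := Ycov _ (sgMn k sY Yx).
    have ins : i \in s by [].
    by exists (Ordinal (etrans (index_mem i s) ins)); rewrite /= nth_index.
  have [h hP] := choice ex.
  have [k1 [k2 [hk kne]]] : exists k1 k2, h k1 = h k2 /\ k1 != k2.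
    apply: contrapT => nE.
    have : injective h.
      move=> k1 k2 hk; apply/eqP; apply: contrapT => /negP kn; apply: nE.
      by exists k1, k2.
    by move=> /leq_card; rewrite !card_ord ltnn.
  have gen : forall a1 a2 : 'I_r.+1, h a1 = h a2 -> (a1 < a2)%N ->
      exists2 j, (0 < j <= r)%N & N (x *+ j).
    move=> a1 a2 ha lt; exists (a2 - a1)%N.
      rewrite subn_gt0 lt /=; apply: leq_trans (leq_subr _ _) _; rewrite -ltnS; exact: ltn_ord.
    rewrite mulrnBr; last exact: ltnW.
    have := N2P _ _ (N1N2 _ (hP a2)) (N1N2 _ (hP a1)).
    by rewrite ha opprB addrA subrK.
  case: (ltngtP k1 k2) => [lt|lt|eq]; first exact: gen hk lt.
    exact: gen (esym hk) lt.
  by move: kne; rewrite -val_eqE /= eq eqxx.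
apply/seteqP; split => // y Yy.
have Yyb : Y (y - b) by apply: sgB => //; exact: BY.
have [x Yx xE] := dY _ r`! Yyb (fact_gt0 r).
have [j /andP [j0 jr] Nj] := pig x Yx.
have /dvdnP [t tE] : (j %| r`!)%N by apply: dvdn_fact; rewrite j0 jr.
have := step b (x *+ j) t Bb (sgMn j sY Yx) Nj.
by rewrite -mulrnA mulnC -tE xE addrC subrK.
Qed.
End Conn.



Lemma tor_of_C (G : topologicalZmodType) : hausdorff_space G ->
  compact [set: G] -> totally_disconnected [set: G] -> C_group G ->
  torsion_group G.
Proof.
move=> hG cG td Cg x0; apply: contrapT => nt.
pose T := [set t : G | exists n, (0 < n)%N /\ t *+ n = 0].
have sT : is_subgroup T.
  split; first by exists 1%N; rewrite mul0rn.
  move=> a b [n [n0 an]] [m [m0 bm]]; exists (n * m)%N.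
  split; first by rewrite muln_gt0 n0 m0.
  by rewrite mulrnBl mulrnA an mul0rn mulnC mulrnA bm mul0rn subr0.
have [K [sK [cov dis]]] := Cg T sT.
have divK : forall k n, K k -> (0 < n)%N -> exists2 a, K a & a *+ n = k.
  move=> k n Kk n0.
  have [w [l [kE ln]]] := decomp (Cg _ (@mset_sg G n)) k.
  have [t [a [Tt [Ka wE]]]] := cov w.
  exists a => //; apply/eqP; rewrite -subr_eq0; apply/eqP; apply: dis.
    have -> : a *+ n - k = - (t *+ n + l).
      by rewrite kE wE mulrnDl addrAC [_ + a *+ n]addrC opprD addrA subrr add0r.
    apply: sgN => //; apply: sgD => //; first exact: sgMn.
    by exists n.
  by apply: sgB => //; exact: sgMn.
have [t [k [Tt [Kk xE]]]] := cov x0.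
have k0 : k != 0.
  apply/eqP => k0; apply: nt; have xt : x0 = t by rewrite xE k0 addr0.
  by case: Tt => n nP; exists n; rewrite xt.
pose Y := closure K.
have cY : compact Y.
  by have := compact_closedI cG (@closed_closure _ K); rewrite setTI.
have sY : is_subgroup Y := closure_sg sK.
have dY : forall y n, Y y -> (0 < n)%N -> exists2 x, Y x & x *+ n = y.
  move=> y n Yy n0.
  have cI : closed [set x *+ n | x in Y].
    apply: compact_closed => //; apply: continuous_compact => //.
    exact: continuous_subspaceT (@natmul_cont G n).
  have KI : K `<=` [set x *+ n | x in Y].
    move=> k' Kk'; have [a Ka aE] := divK _ _ Kk' n0.
    by exists a => //; exact: subset_closure.
  have := cI y (closure_subset KI Yy); case=> x Yx xE'; by exists x.
have cn := div_conn cY sY dY.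
have := td 0 I; move=> tdE.
have : connected_component [set: G] 0 k.
  exists Y; last exact: subset_closure.
  by split => //; exact: sg0.
by rewrite tdE => /= kE; move/eqP: k0; apply.
Qed.

Theorem proposition2p13 (G : topologicalZmodType) :
  profinite_C_group G ->
  (C_group G <-> torsion_group G) /\
  (torsion_group G <-> squarefree_finite_exponent G).
Proof.
move=> [[cG [hG td]] CP].
have CP' : forall H : set G, is_subgroup H -> closed H ->
    exists K, permutable_complement H K.
  by move=> H sH cH; have [K [_ pK]] := CP H sH cH; exists K.
have s2t : squarefree_finite_exponent G -> torsion_group G.
  by move=> [e [[e0 [eA _]] _]] x; exists e.
split; split.
- exact: tor_of_C.
- by move=> tor; apply: C_of_sqf; exact: sqf_exp.
- exact: sqf_exp.
- exact: s2t.
Qed.
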